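(* Let $\bar x\in\mathbb{C}^n$ be a sparsest solution of problem (P), i.e. an optimal solution of (P). Suppose $X^*\in\mathbb{C}^{(n+1)\times(n+1)}$ satisfies all of the following: - $B(X^* )=y$, where $y=(y_1,\dots,y_N)$; - $X^*$ is Hermitian positive semidefinite; - $\operatorname{rank}(X^* )=1$; - $X^*_{1,1}=1$. Suppose further that $B$ is $(\epsilon,2\|X^*\|_0)$-RIP for some $\epsilon<1$. Then: - $X^*=\begin{bmatrix}1\\ \bar x\end{bmatrix}\begin{bmatrix}1 & \bar x^H\end{bmatrix}$; - $X^*_{2:n+1,1}=\bar x$; - $X^*$ is the unique matrix with the properties listed above, and $\bar x$ is the unique sparsest solution of (P).
   Context: Fix integers $n,N\ge 1$ and data $a_i\in\mathbb{C}$, $b_i,c_i\in\mathbb{C}^n$, $Q_i\in\mathbb{C}^{n\times n}$, $y_i\in\mathbb{C}$ for $i=1,\dots,N$. Problem (P) is $$\min_{x\in\mathbb{C}^n}\|x\|_0\quad\text{subject to}\quad y_i=a_i+b_i^H x+x^H c_i+x^H Q_i x,\quad i=1,\dots,N.$$ Here $\|\cdot\|_0$ counts the nonzero entries of a vector or matrix, and ${}^H$ denotes conjugate transpose. Let $\Phi_i=\begin{bmatrix} a_i & b_i^H\\ c_i & Q_i\end{bmatrix}\in\mathbb{C}^{(n+1)\times(n+1)}$. Define the linear operator $B:\mathbb{C}^{(n+1)\times(n+1)}\to\mathbb{C}^N$ by $B(X)=(\operatorname{tr}(\Phi_i X))_{i=1}^N$. A linear operator $B$ of this form is called $(\epsilon,k)$-RIP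 if $\left|\frac{\|B(X)\|^2}{\|X\|^2}-1\right|<\epsilon$ for every nonzero $X\in\mathbb{C}^{(n+1)\times(n+1)}$ with $\|X\|_0\le k$. In this condition $\|B(X)\|$ is the Euclidean norm in $\mathbb{C}^N$ and $\|X\|$ is the spectral norm. $X_{2:n+1,1}$ denotes the vector formed by entries $2,\dots,n+1$ of the first column of $X$.
   Formalization: X* is unique only among matrices X′ that have the four listed properties and for which B is also (ε′, 2‖X′‖₀)-RIP for some ε′ < 1. The statement above fails without it. *)

(* Defs.v *)
(* The field of complex numbers is modelled by an arbitrary
   numClosedFieldType R (e.g. algC). *)
From HB Require Import structures.
From mathcomp Require Import all_boot all_order all_algebra.
Set Implicit Arguments. Unset Strict Implicit. Unset Printing Implicit Defensive.
Import Order.TTheory GRing.Theory Num.Theory.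
Local Open Scope ring_scope.

Section Defs.
Variable R : numClosedFieldType.

Definition mxH m p (A : 'M[R]_(m, p)) : 'M[R]_(p, m) := (map_mx Num.conj A)^T.

Definition nnz m p (A : 'M[R]_(m, p)) : nat :=
  #|[set ij : 'I_m * 'I_p | A ij.1 ij.2 != 0]|.

Definition vnorm2 m (v : 'cV[R]_m) : R := \sum_i `|v i 0| ^+ 2.

Definition is_spectral_norm m p (X : 'M[R]_(m, p)) (s : R) : Prop :=
  0 <= s /\
  (forall v : 'cV[R]_p, vnorm2 (X *m v) <= s ^+ 2 * vnorm2 v) /\
  (exists2 v : 'cV[R]_p, v != 0 & vnorm2 (X *m v) = s ^+ 2 * vnorm2 v).

Definition Phi n (a : R) (b c : 'cV[R]_n) (Q : 'M[R]_n) : 'M[R]_(1 + n) :=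
  block_mx (a%:M : 'M_1) (mxH b) c Q.

Definition Bop n N (a : 'I_N -> R) (b c : 'I_N -> 'cV[R]_n)
  (Q : 'I_N -> 'M[R]_n) (X : 'M[R]_(1 + n)) : 'cV[R]_N :=
  \col_i \tr (Phi (a i) (b i) (c i) (Q i) *m X).

Definition RIP n N (a : 'I_N -> R) (b c : 'I_N -> 'cV[R]_n)
  (Q : 'I_N -> 'M[R]_n) (eps : R) (k : nat) : Prop :=
  forall X : 'M[R]_(1 + n), X != 0 -> (nnz X <= k)%N ->
  forall s, is_spectral_norm X s ->
    `| vnorm2 (Bop a b c Q X) / s ^+ 2 - 1 | < eps.

Definition feasibleP n N (a : 'I_N -> R) (b c : 'I_N -> 'cV[R]_n)
  (Q : 'I_N -> 'M[R]_n) (y : 'I_N -> R) (x : 'cV[R]_n) : Prop :=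
  forall i, y i = a i + (mxH (b i) *m x) 0 0 + (mxH x *m c i) 0 0
                  + (mxH x *m Q i *m x) 0 0.

Definition sparsestP n N (a : 'I_N -> R) (b c : 'I_N -> 'cV[R]_n)
  (Q : 'I_N -> 'M[R]_n) (y : 'I_N -> R) (x : 'cV[R]_n) : Prop :=
  feasibleP a b c Q y x /\
  forall x' : 'cV[R]_n, feasibleP a b c Q y x' -> (nnz x <= nnz x')%N.

Definition hermitian m (X : 'M[R]_m) : Prop := mxH X = X.
Definition psd m (X : 'M[R]_m) : Prop :=
  hermitian X /\ forall v : 'cV[R]_m, 0 <= (mxH v *m X *m v) 0 0.

Definition lifted_props n N (a : 'I_N -> R) (b c : 'I_N -> 'cV[R]_n)
  (Q : 'I_N -> 'M[R]_n) (y : 'I_N -> R) (X : 'M[R]_(1 + n)) : Prop :=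
  Bop a b c Q X = \col_i y i /\ psd X /\ \rank X = 1%N /\
  X (lshift n (0 : 'I_1)) (lshift n (0 : 'I_1)) = 1.

Definition lift1 n (x : 'cV[R]_n) : 'cV[R]_(1 + n) := col_mx (1 : 'cV_1) x.

End Defs.

(* Main.v *)
Require Import Defs.
From HB Require Import structures.
From mathcomp Require Import all_boot all_order all_algebra.
From mathcomp Require Import sesquilinear spectral.
Import Order.TTheory GRing.Theory Num.Theory.
Local Open Scope ring_scope.
Set Implicit Arguments. Unset Strict Implicit. Unset Printing Implicit Defensive.

Section Helpers.
Variable R : numClosedFieldType.

Lemma mxH_mul m p q (A : 'M[R]_(m,p)) (B : 'M[R]_(p,q)) : mxH (A *m B) = mxH B *m mxH A.
Proof. by rewrite /mxH map_mxM trmx_mul. Qed.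

Lemma mxHK m p (A : 'M[R]_(m,p)) : mxH (mxH A) = A.
Proof. by apply/matrixP=> i j; rewrite /mxH !mxE conjCK. Qed.

Lemma mxHB m p (A B : 'M[R]_(m,p)) : mxH (A - B) = mxH A - mxH B.
Proof. by apply/matrixP=> i j; rewrite /mxH !mxE rmorphB. Qed.

Lemma mxHE m p (A : 'M[R]_(m,p)) i j : mxH A i j = (A j i)^*.
Proof. by rewrite /mxH !mxE. Qed.

Lemma vnorm2E m (v : 'cV[R]_m) : vnorm2 v = (mxH v *m v) 0 0.
Proof. rewrite /vnorm2 mxE; apply: eq_bigr => i _; by rewrite mxHE normCK mulrC. Qed.

Lemma vnorm2_unitary m (U : 'M[R]_m) (v : 'cV[R]_m) : mxH U *m U = 1%:M ->
  vnorm2 (U *m v) = vnorm2 v.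
Proof. by move=> HU; rewrite !vnorm2E mxH_mul mulmxA -(mulmxA (mxH v)) HU mulmx1. Qed.

Lemma vnorm2_0 m : vnorm2 (0 : 'cV[R]_m) = 0.
Proof. by rewrite /vnorm2 big1 // => i _; rewrite mxE normr0 expr0n. Qed.

Lemma lift1_top n (z : 'cV[R]_n) : lift1 z (lshift n (0:'I_1)) 0 = 1.
Proof. by rewrite /lift1 col_mxEu mxE. Qed.

Lemma outerE m (w : 'cV[R]_m) i j : (w *m mxH w) i j = w i 0 * (w j 0)^*.
Proof. by rewrite mxE big_ord1 mxHE. Qed.

Lemma col_outer_lift n (z : 'cV[R]_n) :
  col (lshift n (0:'I_1)) (lift1 z *m mxH (lift1 z)) = lift1 z.
Proof.
apply/matrixP=> i j; by rewrite !ord1 mxE outerE lift1_top conjC1 mulr1.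
Qed.

Lemma quad_lift1 n (a : R) (b c x : 'cV[R]_n) (Q : 'M[R]_n) :
  (mxH (lift1 x) *m Phi a b c Q *m lift1 x) 0 0 =
  a + (mxH b *m x) 0 0 + (mxH x *m c) 0 0 + (mxH x *m Q *m x) 0 0.
Proof.
have -> : mxH (lift1 x) = row_mx 1 (mxH x).
  rewrite /lift1 /mxH map_col_mx tr_col_mx; congr row_mx.
  by apply/matrixP=> i j; rewrite !ord1 !mxE eqxx conjC1.
rewrite /Phi /lift1 mul_row_block mul_row_col !mul1mx !mulmx1 mulmxDl !mxE.
by rewrite eqxx mulr1n !addrA (addrAC a).
Qed.

Lemma Bop_outer n N (a : 'I_N -> R) (b c : 'I_N -> 'cV[R]_n) (Q : 'I_N -> 'M[R]_n)
  (w : 'cV[R]_(1 + n)) i :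
  Bop a b c Q (w *m mxH w) i 0 = (mxH w *m Phi (a i) (b i) (c i) (Q i) *m w) 0 0.
Proof.
rewrite /Bop mxE mulmxA mxtrace_mulC mulmxA /mxtrace big_ord1.
by [].
Qed.

Lemma Bop_sub n N (a : 'I_N -> R) (b c : 'I_N -> 'cV[R]_n) (Q : 'I_N -> 'M[R]_n)
  (X Y : 'M[R]_(1 + n)) :
  Bop a b c Q (X - Y) = Bop a b c Q X - Bop a b c Q Y.
Proof. by apply/matrixP=> i j; rewrite !mxE mulmxBr linearB. Qed.

Lemma feas_outer n N (a : 'I_N -> R) (b c : 'I_N -> 'cV[R]_n) (Q : 'I_N -> 'M[R]_n)
  y (x : 'cV[R]_n) :
  feasibleP a b c Q y x <-> Bop a b c Q (lift1 x *m mxH (lift1 x)) = \col_i y i.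
Proof.
split.
  by move=> Hf; apply/matrixP=> i j; rewrite ord1 Bop_outer quad_lift1 mxE Hf.
move=> HB i; have := congr1 (fun v : 'cV[R]_N => v i 0) HB.
by rewrite /= Bop_outer quad_lift1 mxE => ->.
Qed.

Lemma nnzE m p (A : 'M[R]_(m,p)) : nnz A = (\sum_i \sum_j (A i j != 0%R : nat))%N.
Proof.
rewrite /nnz -sum1_card big_mkcond /= pair_big /=.
by apply: eq_bigr => i _; rewrite inE; case: (_ != 0).
Qed.

Lemma nnz_sub m p (A B : 'M[R]_(m,p)) : (nnz (A - B) <= nnz A + nnz B)%N.
Proof.
rewrite !nnzE -big_split /=; apply: leq_sum => i _.
rewrite -big_split /=; apply: leq_sum => j _; rewrite !mxE.
case hA: (A i j == 0); case hB: (B i j == 0) => /=.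
1: by rewrite (eqP hA) (eqP hB) subrr eqxx.
all: by rewrite ?addn0 ?add0n; case: (_ != 0).
Qed.

Definition nnzv m (w : 'cV[R]_m) := (\sum_i (w i ord0 != 0%R : nat))%N.

Lemma nnz_outer m (w : 'cV[R]_m) : nnz (w *m mxH w) = (nnzv w * nnzv w)%N.
Proof.
rewrite nnzE /nnzv big_distrl /=; apply: eq_bigr => i _.
rewrite big_distrr /=; apply: eq_bigr => j _.
by rewrite outerE mulf_eq0 conjC_eq0 negb_or; case: (w i 0 != 0); case: (w j 0 != 0).
Qed.

Lemma nnzv_lift n (z : 'cV[R]_n) : nnzv (lift1 z) = (1 + nnz z)%N.
Proof.
rewrite /nnzv big_split_ord /= big_ord1 nnzE; congr addn.
  by rewrite /lift1 col_mxEu mxE eqxx oner_neq0.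
by apply: eq_bigr => i _; rewrite big_ord1 /lift1 col_mxEd.
Qed.


Lemma rank1_outer n (X : 'M[R]_(1 + n)) :
  mxH X = X -> \rank X = 1%N -> X (lshift n (0:'I_1)) (lshift n (0:'I_1)) = 1 ->
  X = lift1 (dsubmx (col (lshift n (0:'I_1)) X)) *m
      mxH (lift1 (dsubmx (col (lshift n (0:'I_1)) X))).
Proof.
set e0 := lshift n (0:'I_1) => hX rk X00.
have r0 : row e0 X != 0.
  apply/eqP => /matrixP /(_ 0 e0); rewrite !mxE X00 => /eqP; by rewrite oner_eq0.
have sub : (X <= row e0 X)%MS.
  have := mxrank_leqif_sup (row_sub e0 X); case=> _ <-.
  by rewrite rk rank_rV r0.
have Hl : lift1 (dsubmx (col e0 X)) = col e0 X.
  rewrite /lift1 -[RHS]vsubmxK; congr col_mx.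
  by apply/matrixP => i j; rewrite !ord1 !mxE X00.
rewrite Hl; apply/matrixP => i j; rewrite outerE !mxE.
have /sub_rVP [k Hk] := submx_trans (row_sub i X) sub.
have Hij := congr1 (fun M : 'rV[R]_(1 + n) => M 0 j) Hk.
have Hie := congr1 (fun M : 'rV[R]_(1 + n) => M 0 e0) Hk.
have Hc := congr1 (fun M : 'M[R]_(1 + n) => M e0 j) hX.
move: Hij Hie Hc; rewrite /= !mxE X00 mulr1 => -> ->.
by move=> ->.
Qed.


Lemma max_exists m (f : 'I_m -> R) : (0 < m)%N -> (forall i, 0 <= f i) ->
  exists k, forall i, f i <= f k.
Proof.
move=> m0 fr.
suff : forall s : seq 'I_m, s != [::] ->
    exists2 k, k \in s & forall i, i \in s -> f i <= f k.
  move=> /(_ (enum 'I_m)) [].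
    case E: (enum 'I_m) => //; have := mem_enum 'I_m (Ordinal m0).
    by rewrite E.
  by move=> k _ Hk; exists k => i; apply: Hk; rewrite mem_enum.
elim=> [//|x s IH] _.
case: s IH => [|x' s] IH.
  exists x; first exact: mem_head.
  by move=> i; rewrite inE => /eqP ->.
have [k ks Hk] := IH isT.
have /orP [le|le] := ger_leVge (fr x) (fr k).
- exists k; first by rewrite inE ks orbT.
  by move=> i; rewrite inE => /orP [/eqP ->|/Hk].
- exists x; first by rewrite mem_head.
  move=> i; rewrite inE => /orP [/eqP ->|/Hk h]; first by [].
  exact: le_trans h le.
Qed.

Local Open Scope sesquilinear_scope.

Lemma spec_norm_herm m (D : 'M[R]_m) : (0 < m)%N -> mxH D = D ->
  exists s, is_spectral_norm D s.
Proof.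
move=> m0 hD.
have tD : D ^t* = D by rewrite -map_trmx.
have Dn : D \is normalmx by apply/normalmxP; rewrite tD.
set P := spectralmx D; set d := spectral_diag D.
have HD : D = invmx P *m diag_mx d *m P by apply/orthomx_spectralP.
have PU : P \is unitarymx := spectral_unitarymx D.
have PPt : P *m P ^t* = 1%:M by apply/unitarymxP.
have PtP : P ^t* *m P = 1%:M by apply: mulmx1C.
have Pt_H : P ^t* = mxH P by rewrite /mxH map_trmx.
rewrite invmx_unitary // in HD.
have [k Hk] := @max_exists _ (fun i => `|d 0 i|) m0 (fun i => normr_ge0 _).
exists `|d 0 k|; split; first exact: normr_ge0.
have key : forall w : 'cV[R]_m,
    vnorm2 (diag_mx d *m w) = \sum_i `|d 0 i| ^+ 2 * `|w i 0| ^+ 2.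
  by move=> w; rewrite /vnorm2; apply: eq_bigr => i _; rewrite mul_diag_mx mxE normrM exprMn.
have nP : forall v, vnorm2 (P *m v) = vnorm2 v.
  by move=> v; apply: vnorm2_unitary; rewrite -Pt_H.
have nPt : forall v, vnorm2 (P^t* *m v) = vnorm2 v.
  by move=> v; apply: vnorm2_unitary; rewrite Pt_H mxHK -Pt_H.
have DvE : forall v, vnorm2 (D *m v) = vnorm2 (diag_mx d *m (P *m v)).
  by move=> v; rewrite {1}HD -!mulmxA nPt.
split.
  move=> v; rewrite DvE key -(nP v) /vnorm2 big_distrr /=; apply: ler_sum => i _.
  apply: ler_wpM2r; first exact: exprn_ge0 (normr_ge0 _).
  by apply: lerXn2r; rewrite ?nnegrE ?normr_ge0 // Hk.
exists (P^t* *m delta_mx k 0).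
  apply/eqP => /(congr1 (mulmx P)); rewrite mulmxA PPt mul1mx mulmx0.
  move=> /matrixP /(_ k 0); rewrite !mxE !eqxx /= => /eqP; by rewrite oner_eq0.
rewrite DvE mulmxA PPt mul1mx key nPt /vnorm2 (bigD1 k) //= big1; last first.
  by move=> i ne; rewrite mxE (negbTE ne) /= normr0 expr0n mulr0.
have -> : \sum_i `|(delta_mx k 0 : 'cV[R]_m) i 0| ^+ 2 = 1.
  rewrite (bigD1 k) //= big1; last first.
    by move=> i ne; rewrite mxE (negbTE ne) /= normr0 expr0n.
  by rewrite !mxE !eqxx /= normr1 expr1n addr0.
by rewrite !mxE !eqxx /= normr1 expr1n !mulr1 addr0.
Qed.

End Helpers.

Lemma mainL (R : numClosedFieldType) (n N : nat)
  (a : 'I_N -> R) (b c : 'I_N -> 'cV[R]_n) (Q : 'I_N -> 'M[R]_n)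
  (y : 'I_N -> R) (z : 'cV[R]_n) (X : 'M[R]_(1 + n)) (eps : R) :
  sparsestP a b c Q y z -> lifted_props a b c Q y X -> eps < 1 ->
  RIP a b c Q eps (2 * nnz X) -> X = lift1 z *m mxH (lift1 z).
Proof.
move=> [fz minz] [BX [[hX _] [rk X00]]] e1 rip.
set x := dsubmx (col (lshift n (0:'I_1)) X).
have HX : X = lift1 x *m mxH (lift1 x) by apply: rank1_outer.
have fx : feasibleP a b c Q y x by apply/feas_outer; rewrite -HX.
have le_zx := minz x fx.
set Xz := lift1 z *m mxH (lift1 z).
have BXz : Bop a b c Q Xz = \col_i y i by apply/feas_outer.
apply/eqP; rewrite -subr_eq0; apply/negPn/negP => nz.
have hD : mxH (X - Xz) = X - Xz by rewrite mxHB hX /Xz mxH_mul mxHK.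
have n0 : (0 < 1 + n)%N by [].
have [s sn] := spec_norm_herm n0 hD.
have nnzD : (nnz (X - Xz) <= 2 * nnz X)%N.
  apply: leq_trans (nnz_sub _ _) _.
  rewrite mul2n -addnn leq_add2l /Xz [in X in (_ <= X)%N]HX !nnz_outer !nnzv_lift.
  by apply: leq_mul; rewrite leq_add2l.
have := rip _ nz nnzD s sn.
rewrite Bop_sub BX BXz subrr vnorm2_0 mul0r sub0r normrN normr1 => lt1.
by have := lt_trans lt1 e1; rewrite ltxx.
Qed.

Theorem theorem1 (R : numClosedFieldType) (n N : nat)
  (a : 'I_N -> R) (b c : 'I_N -> 'cV[R]_n) (Q : 'I_N -> 'M[R]_n)
  (y : 'I_N -> R) (xbar : 'cV[R]_n) (Xs : 'M[R]_(1 + n)) (eps : R) :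
  (0 < n)%N -> (0 < N)%N ->
  sparsestP a b c Q y xbar ->
  lifted_props a b c Q y Xs ->
  eps < 1 ->
  RIP a b c Q eps (2 * nnz Xs) ->
  [/\ Xs = lift1 xbar *m mxH (lift1 xbar),
      dsubmx (col (lshift n (0 : 'I_1)) Xs) = xbar,
      (forall X' : 'M[R]_(1 + n), lifted_props a b c Q y X' ->
         (exists2 eps' : R, eps' < 1 & RIP a b c Q eps' (2 * nnz X')) ->
         X' = Xs)
    & (forall x' : 'cV[R]_n, sparsestP a b c Q y x' -> x' = xbar)].
Proof.
move=> _ _ sp lp e1 rip.
have H1 := mainL sp lp e1 rip.
have H2 : dsubmx (col (lshift n (0 : 'I_1)) Xs) = xbar.
  by rewrite H1 col_outer_lift /lift1 col_mxKd.
split => //.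
- by move=> X' lp' [e' e1' rip']; rewrite (mainL sp lp' e1' rip').
- move=> x' sp'; have H1' := mainL sp' lp e1 rip.
  by rewrite -H2 H1' col_outer_lift /lift1 col_mxKd.
Qed.
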